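(* For every $n\ge 2$, the sensitivity to synchronism of elementary cellular automaton rule $170$ satisfies $\mu(f_{170,n})=\dfrac{2^n-1}{3^n-2^{n+1}+2}$.
   Context: Cells are indexed by $\mathbb{Z}_n=\{0,\dots,n-1\}$, indices modulo $n$. Rule $170$ has local rule $r_{170}(x_1,x_2,x_3)=x_3$ and global function $f_{170,n}(x)_i=r_{170}(x_{i-1},x_i,x_{i+1})=x_{i+1}$. An update schedule is an ordered partition $\Delta=(\Delta_1,\dots,\Delta_k)$ of $\mathbb{Z}_n$ into nonempty blocks; $\mathcal{P}_n$ is the set of them. For a block $B$ let $f^{(B)}(x)_i=f_{170,n}(x)_i$ if $i\in B$ and $x_i$ otherwise; $f^{(\Delta)}_{170,n}=f^{(\Delta_k)}\circ\cdots\circ f^{(\Delta_1)}$. The dynamics of $\Delta$ is the transition digraph with arcs $(x,f^{(\Delta)}_{170,n}(x))$; $\mathcal{D}(f_{170,n})$ is the set of distinct dynamics over $\Delta\in\mathcal{P}_n$. The sensitivity to synchronism is $\mu(f_{170,n})=|\mathcal{D}(f_{170,n})|/(3^n-2^{n+1}+2)$. *)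

(* Defs.v *)
From mathcomp Require Import all_boot all_order all_algebra.
From mathcomp Require Import boolp.
Set Implicit Arguments. Unset Strict Implicit. Unset Printing Implicit Defensive.

(* Configurations on the ring Z_n : cells 'I_n, successor/predecessor mod n. *)
Definition config (n : nat) := {ffun 'I_n -> bool}.

Definition r170 (x1 x2 x3 : bool) : bool := x3.

Definition f170 (n : nat) (x : config n) : config n :=
  [ffun i => r170 (x (ord_pred i)) (x i) (x (ordS i))].

Definition is_schedule (n : nat) (D : seq {set 'I_n}) : bool :=
  [&& all (fun B => B != set0) D,
      pairwise (fun A B : {set 'I_n} => [disjoint A & B]) D &
      \bigcup_(B <- D) B == [set: 'I_n]].

Definition block_upd (n : nat) (B : {set 'I_n}) (x : config n) : config n :=
  [ffun i => if i \in B then f170 x i else x i].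

Definition sched_fun (n : nat) (D : seq {set 'I_n}) (x : config n) : config n :=
  foldl (fun y B => block_upd B y) x D.

Definition dynamics (n : nat) (D : seq {set 'I_n}) : {ffun config n -> config n} :=
  [ffun x => sched_fun D x].

Definition dyn_set (n : nat) : {set {ffun config n -> config n}} :=
  [set g | `[< exists D, is_schedule D /\ g = dynamics D >]].

Definition mu170 (n : nat) : rat :=
  (#|dyn_set n|%:R / ((3 ^ n)%:R - (2 ^ n.+1)%:R + 2))%R.

(* Main.v *)
Require Import Defs.
From mathcomp Require Import all_boot all_order all_algebra.
From mathcomp Require Import boolp.
From mathcomp Require Import zify.
Set Implicit Arguments. Unset Strict Implicit. Unset Printing Implicit Defensive.

Definition uB (n : nat) (B : {set 'I_n}) (i : 'I_n) : 'I_n :=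
  if i \in B then ordS i else i.

Definition PD (n : nat) (D : seq {set 'I_n}) (i : 'I_n) : 'I_n := foldr (@uB n) i D.

Lemma sched_funE (n : nat) (D : seq {set 'I_n}) (x : config n) :
  sched_fun D x = [ffun i => x (PD D i)].
Proof.
elim: D x => [|B D IH] x /=.
  by apply/ffunP => i; rewrite ffunE.
rewrite /sched_fun /= -/(sched_fun D _) IH.
apply/ffunP => i; rewrite !ffunE /uB.
by case: (PD D i \in B).
Qed.

Lemma ordS_val (n : nat) (i : 'I_n) : val (ordS i) = if i.+1 == n then 0 else i.+1.
Proof.
rewrite /ordS /=; case: eqP => [->|H]; first by rewrite modnn.
by rewrite modn_small //; have := ltn_ord i; lia.
Qed.

Lemma iter_ordS_val (n : nat) (m : nat) (i : 'I_n) :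
  val (iter m (@ordS n) i) = (i + m) %% n.
Proof.
elim: m => [|m IH] /=; first by rewrite addn0 modn_small.
by rewrite /ordS /= IH -[(_ %% n).+1]addn1 modnDml addn1 addnS.
Qed.

Lemma iter_ordS_surj (n : nat) (i j : 'I_n) : exists2 m, m < n & iter m (@ordS n) i = j.
Proof.
have Hi := ltn_ord i; have Hj := ltn_ord j.
case: (leqP i j) => Hij.
  exists (j - i); first lia.
  by apply: val_inj; rewrite iter_ordS_val subnKC // modn_small.
exists (j + n - i); first lia.
apply: val_inj; rewrite iter_ordS_val.
have -> : i + (j + n - i) = j + n by lia.
by rewrite modnDr modn_small.
Qed.

Lemma iter_ordS_neq (n : nat) (m : nat) (i : 'I_n) :
  0 < m < n -> iter m (@ordS n) i != i.
Proof.
move=> Hm; apply/eqP => /(congr1 val); rewrite iter_ordS_val /= => E.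
have Hi := ltn_ord i.
case: (ltnP (i + m) n) => H.
  by move: E; rewrite modn_small //; lia.
move: E; have -> : i + m = (i + m - n) + n by lia.
by rewrite modnDr modn_small; lia.
Qed.

Lemma PD_beta (n : nat) (D : seq {set 'I_n}) (beta : 'I_n -> nat) :
  (forall i k, k < size D -> (i \in nth set0 D k) = (beta i == k)) ->
  forall i, PD D i = if beta i < size D then
     (if beta (ordS i) < beta i then PD D (ordS i) else ordS i) else i.
Proof.
elim/last_ind: D => [|D B IH] H i; first by [].
have HD : forall i k, k < size D -> (i \in nth set0 D k) = (beta i == k).
  move=> j k Hk; rewrite -H ?size_rcons; last lia.
  by rewrite nth_rcons Hk.
have HB : forall j, (j \in B) = (beta j == size D).
  move=> j; rewrite -H ?size_rcons // nth_rcons ltnn eqxx //=.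
rewrite /PD !foldr_rcons -!/(PD D _) size_rcons /uB !HB.
case: (ltngtP (beta i) (size D)) => Hi.
- rewrite (IH HD i) Hi.
  have -> : (beta i < (size D).+1) by lia.
  case: ifP => // Hlt.
  by have -> : (beta (ordS i) == size D) = false by lia.
- rewrite (IH HD i); have -> : (beta i < (size D).+1) = false by lia.
  by rewrite ifF //; lia.
- rewrite Hi ltnSn.
  case: (ltngtP (beta (ordS i)) (size D)) => H2 //=.
  + by rewrite (IH HD (ordS i)) ltnNge ltnW.
  + by rewrite (IH HD (ordS i)) H2 ltnn.
Qed.

Definition KS (n : nat) (S : {set 'I_n}) (P : 'I_n -> 'I_n) :=
  forall i, P i = if i \in S then P (ordS i) else ordS i.

Lemma notT_ex (n : nat) (S : {set 'I_n}) : S != setT -> exists j, j \notin S.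
Proof.
case: (pickP [pred j | j \notin S]) => [j Hj | H] HS; first by exists j.
by move: HS; have -> : S = setT; [apply/setP => j; rewrite inE; move: (H j) => /= /negbFE -> | rewrite eqxx].
Qed.

Lemma KS_uniq (n : nat) (S : {set 'I_n}) (P P' : 'I_n -> 'I_n) :
  S != setT -> KS S P -> KS S P' -> P =1 P'.
Proof.
move=> /notT_ex [j Hj] HP HP'.
have key : forall m i, iter m (@ordS n) i = j -> P i = P' i.
  elim=> [|m IH] i.
    by move=> /= ->; rewrite HP HP' (negbTE Hj).
  rewrite iterSr => /IH E.
  by rewrite HP HP' E.
move=> i; have [m _ Hm] := iter_ordS_surj i j.
exact: (key m i Hm).
Qed.

Lemma iter_ordS_n (n : nat) (i : 'I_n) : iter n (@ordS n) i = i.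
Proof.
by apply: val_inj; rewrite iter_ordS_val modnDr modn_small.
Qed.

Lemma KS_inj_aux (n : nat) (S T : {set 'I_n}) (P : 'I_n -> 'I_n) (i : 'I_n) :
  1 < n -> KS S P -> KS T P -> i \in S -> i \notin T -> S = setT.
Proof.
move=> Hn HS HT iS iT.
set k := ordS i.
have Pk : P k = k.
  by have := HS i; rewrite iS HT (negbTE iT) => <-.
have claim : forall m, m.+1 < n -> P (iter m (@ordS n) k) = k.
  elim=> [|m IH] Hm //=.
  have E := IH (ltnW Hm).
  set l := iter m (@ordS n) k in E *.
  have lneq : l != i.
    rewrite /l /k -iterSr; apply: iter_ordS_neq; lia.
  have lS : l \in S.
    case lS: (l \in S) => //; move: (HS l); rewrite lS E => /ordS_inj lE.
    by move: lneq; rewrite lE eqxx.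
  by rewrite HS lS in E.
apply/setP => l; rewrite inE.
case: (eqVneq l i) => [->|lneq]; first exact: iS.
have [m Hm Hml] := iter_ordS_surj k l.
have Hm1 : m.+1 < n.
  case: (ltngtP m.+1 n) => //; first lia.
  move=> Em; move: lneq; rewrite -Hml /k -iterSr Em iter_ordS_n eqxx //.
case lS: (l \in S) => //.
have := claim m Hm1; rewrite Hml HS lS => /ordS_inj lE.
by move: lneq; rewrite lE eqxx.
Qed.

Lemma KS_inj (n : nat) (S T : {set 'I_n}) (P : 'I_n -> 'I_n) :
  1 < n -> S != setT -> T != setT -> KS S P -> KS T P -> S = T.
Proof.
move=> Hn nS nT HS HT; apply/setP => i.
case iS: (i \in S); case iT: (i \in T) => //.
- by move: nS; rewrite (KS_inj_aux Hn HS HT iS) ?iT // eqxx.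
- by move: nT; rewrite (KS_inj_aux Hn HT HS iT) ?iS // eqxx.
Qed.

Lemma mem_bigcup_seq (n : nat) (s : seq {set 'I_n}) x :
  (x \in \bigcup_(B <- s) B) = has (fun B : {set 'I_n} => x \in B) s.
Proof.
elim: s => [|B s IH]; first by rewrite big_nil inE.
by rewrite big_cons inE IH.
Qed.

Definition betaD (n : nat) (D : seq {set 'I_n}) (i : 'I_n) := find (fun B : {set 'I_n} => i \in B) D.

Definition SD (n : nat) (D : seq {set 'I_n}) : {set 'I_n} :=
  [set i | betaD D (ordS i) < betaD D i].

Lemma sched_cover (n : nat) (D : seq {set 'I_n}) i :
  is_schedule D -> betaD D i < size D.
Proof.
case/and3P => _ _ /eqP HC.
rewrite /betaD -has_find -mem_bigcup_seq HC inE //.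
Qed.

Lemma sched_beta (n : nat) (D : seq {set 'I_n}) :
  is_schedule D -> forall i k, k < size D -> (i \in nth set0 D k) = (betaD D i == k).
Proof.
move=> HD i k Hk; have Hc := sched_cover i HD.
case/and3P: HD => _ /(pairwiseP set0) Hpw _.
have Hhas : has (fun B : {set 'I_n} => i \in B) D by rewrite has_find.
have Hf' : i \in nth set0 D (betaD D i) := nth_find set0 Hhas.
apply/idP/eqP => [ik|<-]; last exact: Hf'.
case: (ltngtP (betaD D i) k) => // H.
- have := Hpw _ _ Hc Hk H.
  by move=> /disjointFr /(_ Hf'); rewrite ik.
- by have := before_find set0 H; rewrite ik.
Qed.

Lemma sched_KS (n : nat) (D : seq {set 'I_n}) :
  is_schedule D -> KS (SD D) (PD D).
Proof.
move=> HD i.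
by rewrite (PD_beta (sched_beta HD) i) sched_cover // inE.
Qed.

Lemma SD_proper (n : nat) (D : seq {set 'I_n}) (i0 : 'I_n) :
  is_schedule D -> SD D != setT.
Proof.
move=> HD.
case: (arg_minnP (betaD D) (isT : predT i0)) => j _ Hj.
apply/negP => /eqP E.
have : j \in SD D by rewrite E inE.
rewrite inE ltnNge Hj //.
Qed.

Definition pos (n : nat) (j c : 'I_n) : nat :=
  if j < c then c - j.+1 else c + n - j.+1.

Lemma pos_lt (n : nat) (j c : 'I_n) : pos j c < n.
Proof. rewrite /pos; have := ltn_ord j; have := ltn_ord c; case: (ltnP j c); lia. Qed.

Lemma pos_eq (n : nat) (j l c : 'I_n) : (pos j l == pos j c) = (l == c).
Proof.
have := ltn_ord j; have := ltn_ord c; have := ltn_ord l.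
rewrite /pos -val_eqE /=; case: (ltnP j c); case: (ltnP j l); lia.
Qed.

Lemma pos_ordS (n : nat) (j i : 'I_n) : i != j -> pos j (ordS i) = (pos j i).+1.
Proof.
rewrite -val_eqE /= => Hij.
have := ltn_ord j; have := ltn_ord i; rewrite /pos ordS_val.
case: eqP => H.
  rewrite ltn0; case: (ltnP j i); lia.
case: (ltnP j i.+1); case: (ltnP j i); lia.
Qed.

Lemma pos_ordS_j (n : nat) (j : 'I_n) : pos j (ordS j) = 0.
Proof.
have := ltn_ord j; rewrite /pos ordS_val.
case: eqP => H; first by rewrite ltn0; lia.
rewrite ltnSn; lia.
Qed.

Definition tt (n : nat) (S : {set 'I_n}) (j c : 'I_n) : nat :=
  #|[set l | (l \in S) && (pos j l < pos j c)]|.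

Lemma tt_le (n : nat) (S : {set 'I_n}) (j c : 'I_n) : tt S j c <= n.-1.
Proof.
rewrite /tt; have <- : #|[set~ c]| = n.-1 by rewrite cardsC1 card_ord.
apply: subset_leq_card; apply/subsetP => l; rewrite !inE => /andP [_ H].
by apply/eqP => E; move: H; rewrite E ltnn.
Qed.

Lemma tt_ordS_j (n : nat) (S : {set 'I_n}) (j : 'I_n) : tt S j (ordS j) = 0.
Proof.
rewrite /tt pos_ordS_j; apply/eqP; rewrite cards_eq0; apply/eqP/setP => l.
by rewrite !inE ltn0 andbF.
Qed.

Lemma tt_ordS (n : nat) (S : {set 'I_n}) (j i : 'I_n) :
  i != j -> tt S j (ordS i) = tt S j i + (i \in S).
Proof.
move=> Hij; rewrite /tt pos_ordS //.
case iS: (i \in S).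
  have -> : [set l | (l \in S) && (pos j l < (pos j i).+1)] =
            i |: [set l | (l \in S) && (pos j l < pos j i)].
    apply/setP => l; rewrite !inE ltnS leq_eqVlt pos_eq.
    by case: (eqVneq l i) => [->|]; rewrite ?iS ?ltnn //= andbF.
  by rewrite cardsU1 inE ltnn andbF /= addnC.
rewrite addn0; apply: eq_card => l; rewrite !inE ltnS leq_eqVlt pos_eq.
by case: (eqVneq l i) => [->|]; rewrite ?iS ?ltnn //= andbF.
Qed.

Definition bet (n : nat) (S : {set 'I_n}) (j c : 'I_n) : nat := n.-1 - tt S j c.

Definition D0 (n : nat) (S : {set 'I_n}) (j : 'I_n) : seq {set 'I_n} :=
  [seq [set c | bet S j c == k] | k <- iota 0 n].

Definition sched (n : nat) (S : {set 'I_n}) (j : 'I_n) : seq {set 'I_n} :=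
  filter (fun B => B != set0) (D0 S j).

Lemma PD_filter (n : nat) (D : seq {set 'I_n}) i :
  PD (filter (fun B => B != set0) D) i = PD D i.
Proof.
elim: D => [|B D IH] //=.
case: eqP => [->|_] /=; rewrite /PD /= -!/(PD _ _) IH //.
by rewrite /uB inE.
Qed.

Lemma bet_lt (n : nat) (S : {set 'I_n}) (j c : 'I_n) : bet S j c < n.
Proof. rewrite /bet; have := ltn_ord c; lia. Qed.

Lemma D0_beta (n : nat) (S : {set 'I_n}) (j : 'I_n) :
  forall i k, k < size (D0 S j) -> (i \in nth set0 (D0 S j) k) = (bet S j i == k).
Proof.
move=> i k; rewrite size_map size_iota => Hk.
by rewrite (nth_map 0) ?size_iota // nth_iota // inE.
Qed.

Lemma sched_KS2 (n : nat) (S : {set 'I_n}) (j : 'I_n) :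
  j \notin S -> KS S (PD (sched S j)).
Proof.
move=> jS i.
rewrite /sched !PD_filter (PD_beta (@D0_beta n S j) i).
rewrite size_map size_iota bet_lt.
have Hc : (bet S j (ordS i) < bet S j i) = (i \in S).
  rewrite /bet; have := tt_le S j i; have := tt_le S j (ordS i).
  case: (eqVneq i j) => [->|Hij].
    rewrite tt_ordS_j (negbTE jS); lia.
  rewrite tt_ordS //; case: (i \in S) => /=; lia.
by rewrite Hc.
Qed.

Lemma sched_is (n : nat) (S : {set 'I_n}) (j : 'I_n) : is_schedule (sched S j).
Proof.
apply/and3P; split.
- by rewrite /sched filter_all.
- apply: pairwise_filter; rewrite /D0 pairwise_map.
  apply: (sub_pairwise (r := [rel x y | x != y])); last by rewrite -uniq_pairwise iota_uniq.
  move=> k l /= Hkl; rewrite -setI_eq0; apply/eqP/setP => c; rewrite !inE.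
  by case: (eqVneq (bet S j c) k) => // ->; rewrite (negbTE Hkl).
- apply/eqP/setP => c; rewrite inE mem_bigcup_seq; apply/hasP.
  exists [set c' | bet S j c' == bet S j c]; last by rewrite inE.
  rewrite /sched mem_filter; apply/andP; split.
    by apply/set0Pn; exists c; rewrite inE.
  by apply: map_f; rewrite mem_iota add0n bet_lt.
Qed.

Lemma dyn_PD1 (n : nat) (D D' : seq {set 'I_n}) :
  dynamics D = dynamics D' -> PD D =1 PD D'.
Proof.
move=> E i.
have := congr1 (fun g : {ffun config n -> config n} => g [ffun c => c == PD D i] i) E.
rewrite /= !ffunE !sched_funE !ffunE eqxx => /esym/eqP.
by move=> ->.
Qed.

Lemma dyn_PD2 (n : nat) (D D' : seq {set 'I_n}) :
  PD D =1 PD D' -> dynamics D = dynamics D'.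
Proof.
move=> E; apply/ffunP => x; rewrite !ffunE !sched_funE.
by apply/ffunP => i; rewrite !ffunE E.
Qed.

Lemma KS_ext (n : nat) (S : {set 'I_n}) (P P' : 'I_n -> 'I_n) :
  P =1 P' -> KS S P -> KS S P'.
Proof. by move=> E H i; rewrite -!E H. Qed.

Definition schedS (n : nat) (S : {set 'I_n}) : seq {set 'I_n} :=
  match [pick j | j \notin S] with Some j => sched S j | None => [::] end.

Definition Fdyn (n : nat) (S : {set 'I_n}) := dynamics (schedS S).

Lemma schedS_ok (n : nat) (S : {set 'I_n}) :
  S != setT -> is_schedule (schedS S) /\ KS S (PD (schedS S)).
Proof.
rewrite /schedS; case: pickP => [j Hj | H] HS.
  by split; [apply: sched_is | apply: sched_KS2].
have [j Hj] := notT_ex HS.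
by move: (H j); rewrite /= Hj.
Qed.

Lemma card_dyn (n : nat) : 1 < n -> #|dyn_set n| = 2 ^ n - 1.
Proof.
move=> Hn.
have i0 : 'I_n := Ordinal (ltnW Hn).
have -> : dyn_set n = (@Fdyn n) @: [set S : {set 'I_n} | S != setT].
  apply/setP => g; rewrite inE; apply/asboolP/imsetP.
  - move=> [D [HD ->]].
    exists (SD D); first by rewrite inE; apply: (SD_proper i0).
    have HP := SD_proper i0 HD.
    have [_ HK] := schedS_ok HP.
    apply: dyn_PD2; apply: (KS_uniq HP (sched_KS HD) HK).
  - move=> [S]; rewrite inE => HS ->.
    have [H1 _] := schedS_ok HS.
    by exists (schedS S).
rewrite card_in_imset.
  have -> : [set S : {set 'I_n} | S != setT] = [set~ setT].
    by apply/setP => S; rewrite !inE.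
  by rewrite cardsC1 -cardsT -powersetT card_powerset cardsT card_ord subn1.
move=> S T; rewrite !inE => HS HT E.
have [_ KS1] := schedS_ok HS.
have [_ KT1] := schedS_ok HT.
have E' := dyn_PD1 E.
exact: (KS_inj Hn HS HT KS1 (KS_ext (fun i => esym (E' i)) KT1)).
Qed.

Theorem mainTheorem3 (n : nat) (hn : 2 <= n) :
  mu170 n = (((2 ^ n)%:R - 1) / ((3 ^ n)%:R - (2 ^ n.+1)%:R + 2))%R.
Proof.
rewrite /mu170 card_dyn // GRing.natrB ?expn_gt0 //.
Qed.
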